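(* Fix a TxnSP instance. Let $i$ and $j$ be subschedules formed by the same subset $S\subseteq J$, and suppose $i$ dominates $j$, i.e. $ms_i\le mt_j$. Let $S'\supseteq S$. Then for every subschedule $l$ formed by $S'$ and derived from $j$, there exists a subschedule $k$ formed by $S'$ and derived from $i$ with $ms_k\le ms_l$.
   Context: TxnSP instance: jobs $J=\{1,\dots,n\}$, identical machines $1,\dots,m$, lengths $L_\alpha>0$, symmetric binary conflict matrix $C$ with zero diagonal ($C_{\alpha\beta}=1$ iff $\alpha\neq\beta$ conflict). Insertion process: Start from some state, where each machine $\mu$ has a processing time $P_\mu$ (initially $0$ when empty). An instruction $(\alpha,\mu)$ appends a not-yet-placed job $\alpha$ at the end of machine $\mu$. It assigns $\alpha$ the start time $st(\alpha)$, defined as the least $t\ge P_\mu$ such that $[t,t+L_\alpha)$ is disjoint from $[st(\beta),ct(\beta))$ for every already placed job $\beta$ with $C_{\alpha\beta}=1$. It then sets the completion time $ct(\alpha)=st(\alpha)+L_\alpha$ and updates $P_\mu:=ct(\alpha)$. A subschedule formed by $S\subseteq J$ is the result (machine assignment, per-machine order, start and completion times) of applying, from the empty state, a list of instructions whose jobs are exactly the elements of $S$. Its size is $|S|$. A schedule is a subschedule formed by $J$. Its makespan $ms$ is $\max_\mu P_\mu$, and its minimum time $mt$ is $\min_\mu P_\mu$. A subschedule $j$ is derived from $i$ (and $i$ is a root of $j$) if there is an instruction list producing $i$ and a further list $\mathcal D$ (the derivation plan) such that applying $\mathcal D$ after it produces $j$. The residual subschedule $j-i$ is the result of applying $\mathcal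 D$ from the empty state. *)

(* Defs.v *)
From Stdlib Require Import Reals List Arith.
Import ListNotations.
Open Scope R_scope.

(* Jobs are the naturals 0..n-1, machines the naturals 0..m-1.
   A state records, for every job, either None (not yet placed) or
   Some (machine, start time); and for every machine its processing time P. *)
Definition State : Type := ((nat -> option (nat * R)) * (nat -> R))%type.

Definition empty_state : State := (fun _ => None, fun _ => 0).

Definition Pt (s : State) (mu : nat) : R := snd s mu.

Definition feasible (L : nat -> R) (C : nat -> nat -> bool)
  (s : State) (a mu : nat) (t : R) : Prop :=
  Pt s mu <= t /\
  forall b mb tb, fst s b = Some (mb, tb) -> C a b = true ->
    (t + L a <= tb \/ tb + L b <= t).

Definition step (n m : nat) (L : nat -> R) (C : nat -> nat -> bool)
  (s : State) (ins : nat * nat) (s' : State) : Prop :=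
  let (a, mu) := ins in
  (a < n)%nat /\ (mu < m)%nat /\ fst s a = None /\
  exists t, feasible L C s a mu t /\
    (forall t', feasible L C s a mu t' -> t <= t') /\
    s' = (fun b => if Nat.eqb b a then Some (mu, t) else fst s b,
          fun nu => if Nat.eqb nu mu then t + L a else snd s nu).

Inductive run (n m : nat) (L : nat -> R) (C : nat -> nat -> bool)
  : State -> list (nat * nat) -> State -> Prop :=
| run_nil s : run n m L C s [] s
| run_cons s ins l s1 s2 :
    step n m L C s ins s1 -> run n m L C s1 l s2 -> run n m L C s (ins :: l) s2.

Definition formed_by (n m : nat) (L : nat -> R) (C : nat -> nat -> bool)
  (S : nat -> Prop) (s : State) : Prop :=
  exists l, run n m L C empty_state l s /\
    (forall a, In a (map fst l) <-> S a).

Definition derived (n m : nat) (L : nat -> R) (C : nat -> nat -> bool)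
  (i j : State) : Prop :=
  exists l D, run n m L C empty_state l i /\ run n m L C i D j.

(* makespan = max_mu P_mu, minimum time = min_mu P_mu (for m >= 1). *)
Definition ms (m : nat) (s : State) : R :=
  fold_right (fun mu acc => Rmax (Pt s mu) acc) (Pt s 0%nat) (seq 0 m).
Definition mt (m : nat) (s : State) : R :=
  fold_right (fun mu acc => Rmin (Pt s mu) acc) (Pt s 0%nat) (seq 0 m).

(* Main.v *)
Require Import Defs.
From Stdlib Require Import Reals List Arith Lra Lia Classical.
Import ListNotations.
Open Scope R_scope.

Lemma list_min {A} (f : A -> R) (P : A -> Prop) (lst : list A) :
  (exists x, In x lst /\ P x) ->
  exists x, In x lst /\ P x /\ forall y, In y lst -> P y -> f x <= f y.
Proof.
  induction lst as [|a lst IH]; intros [x [Hx Px]]; [destruct Hx|].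
  destruct (classic (exists x, In x lst /\ P x)) as [Hex|Hno].
  - destruct (IH Hex) as [z [Hz [Pz Hmin]]].
    destruct (classic (P a /\ f a <= f z)) as [[Pa Ha]|Hn].
    + exists a. split; [left; reflexivity|]. split; [exact Pa|].
      intros y [<-|Hy] Py; [lra|]. specialize (Hmin y Hy Py). lra.
    + exists z. split; [right; exact Hz|]. split; [exact Pz|].
      intros y [<-|Hy] Py; [|exact (Hmin y Hy Py)].
      destruct (Rle_dec (f a) (f z)) as [h|h]; [exfalso; apply Hn; auto|lra].
  - destruct Hx as [<-|Hx]; [|exfalso; apply Hno; eauto].
    exists a. split; [left; reflexivity|]. split; [exact Px|].
    intros y [<-|Hy] Py; [lra|]. exfalso; apply Hno; eauto.
Qed.

Definition WF (n m : nat) (L : nat -> R) (C : nat -> nat -> bool) (s : State) : Prop :=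
  (forall b mb tb, fst s b = Some (mb, tb) -> (b < n)%nat /\ (mb < m)%nat) /\
  (forall b mb tb, fst s b = Some (mb, tb) -> tb + L b <= Pt s mb) /\
  (forall b mb tb c mc tc, fst s b = Some (mb, tb) -> fst s c = Some (mc, tc) -> b <> c ->
     (mb = mc \/ C b c = true) -> tb + L b <= tc \/ tc + L c <= tb).

Lemma WF_empty n m L C : WF n m L C empty_state.
Proof. repeat split; simpl; intros; discriminate. Qed.

Lemma step_WF n m L C (hL : forall a, (a < n)%nat -> 0 < L a)
  (hCsym : forall a b, C a b = C b a) s ins s' :
  WF n m L C s -> step n m L C s ins s' -> WF n m L C s'.
Proof.
  destruct ins as [a mu]; intros [R0 [R1 R2]] [Ha [Hmu [Hnone [t [[HP Hf] [Hmin ->]]]]]].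
  pose proof (hL a Ha) as La.
  split; [|split].
  - simpl; intros b mb tb. destruct (Nat.eqb_spec b a) as [->|hne].
    + intros H; inversion H; subst; auto.
    + apply R0.
  - unfold Pt; simpl; intros b mb tb. destruct (Nat.eqb_spec b a) as [->|hne].
    + intros H; inversion H; subst. rewrite Nat.eqb_refl. lra.
    + intros H. destruct (Nat.eqb_spec mb mu) as [->|hm].
      * pose proof (R1 _ _ _ H). unfold Pt in *. lra.
      * exact (R1 _ _ _ H).
  - simpl; intros b mb tb c mc tc Hb Hc hbc Hor.
    destruct (Nat.eqb_spec b a) as [->|hba]; destruct (Nat.eqb_spec c a) as [->|hca].
    + congruence.
    + inversion Hb; subst. destruct Hor as [<-|HC].
      * right. pose proof (R1 _ _ _ Hc). unfold Pt in *. lra.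
      * exact (Hf _ _ _ Hc HC).
    + inversion Hc; subst. destruct Hor as [->|HC].
      * left. pose proof (R1 _ _ _ Hb). unfold Pt in *. lra.
      * rewrite hCsym in HC. destruct (Hf _ _ _ Hb HC); [right|left]; lra.
    + exact (R2 _ _ _ _ _ _ Hb Hc hbc Hor).
Qed.

Lemma run_WF n m L C (hL : forall a, (a < n)%nat -> 0 < L a)
  (hCsym : forall a b, C a b = C b a) s D s' :
  run n m L C s D s' -> WF n m L C s -> WF n m L C s'.
Proof.
  induction 1; intros; auto. apply IHrun. eapply step_WF; eauto.
Qed.

Lemma step_M1 n m L C s ins s' b v :
  step n m L C s ins s' -> fst s b = Some v -> fst s' b = Some v.
Proof.
  destruct ins as [a mu]; intros [Ha [Hmu [Hnone [t [[HP Hf] [Hmin ->]]]]]] Hb.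
  simpl. destruct (Nat.eqb_spec b a); [subst; congruence|exact Hb].
Qed.

Lemma step_M2 n m L C (hL : forall a, (a < n)%nat -> 0 < L a) s ins s' nu :
  step n m L C s ins s' -> Pt s nu <= Pt s' nu.
Proof.
  destruct ins as [a mu]; intros [Ha [Hmu [Hnone [t [[HP Hf] [Hmin ->]]]]]].
  pose proof (hL a Ha). unfold Pt in *; simpl.
  destruct (Nat.eqb_spec nu mu); [subst; lra|lra].
Qed.

Lemma step_M3 n m L C s ins s' b mb tb :
  step n m L C s ins s' -> fst s' b = Some (mb, tb) -> fst s b = None -> Pt s mb <= tb.
Proof.
  destruct ins as [a mu]; intros [Ha [Hmu [Hnone [t [[HP Hf] [Hmin ->]]]]]] Hb Hn.
  simpl in Hb. destruct (Nat.eqb_spec b a); [|congruence].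
  inversion Hb; subst. exact HP.
Qed.

Lemma step_placed n m L C s ins s' b :
  step n m L C s ins s' -> (fst s' b <> None <-> fst s b <> None \/ b = fst ins).
Proof.
  destruct ins as [a mu]; intros [Ha [Hmu [Hnone [t [[HP Hf] [Hmin ->]]]]]].
  simpl. destruct (Nat.eqb_spec b a); split; intros; try tauto; try discriminate; try (destruct H; [auto|congruence]).
Qed.

Lemma run_M1 n m L C s D s' b v :
  run n m L C s D s' -> fst s b = Some v -> fst s' b = Some v.
Proof. induction 1; intros; auto. apply IHrun. eapply step_M1; eauto. Qed.

Lemma run_M2 n m L C (hL : forall a, (a < n)%nat -> 0 < L a) s D s' nu :
  run n m L C s D s' -> Pt s nu <= Pt s' nu.
Proof.
  induction 1; [lra|]. pose proof (step_M2 n m L C hL _ _ _ nu H). lra.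
Qed.

Lemma run_M3 n m L C (hL : forall a, (a < n)%nat -> 0 < L a) s D s' b mb tb :
  run n m L C s D s' -> fst s' b = Some (mb, tb) -> fst s b = None -> Pt s mb <= tb.
Proof.
  induction 1; intros Hb Hn; [congruence|].
  destruct (fst s1 b) as [v|] eqn:E.
  - pose proof (run_M1 _ _ _ _ _ _ _ _ _ H0 E). rewrite Hb in H1. inversion H1; subst.
    eapply step_M3; eauto.
  - pose proof (IHrun Hb eq_refl). pose proof (step_M2 n m L C hL _ _ _ mb H). lra.
Qed.

Lemma run_placed n m L C s D s' b :
  run n m L C s D s' -> (fst s' b <> None <-> fst s b <> None \/ In b (map fst D)).
Proof.
  induction 1; simpl; [tauto|].
  rewrite IHrun. rewrite (step_placed _ _ _ _ _ _ _ b H). intuition.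
Qed.

Lemma run_app n m L C s D1 s1 D2 s2 :
  run n m L C s D1 s1 -> run n m L C s1 D2 s2 -> run n m L C s (D1 ++ D2) s2.
Proof. induction 1; intros; simpl; auto. econstructor; eauto. Qed.

Lemma fold_max_ge (g : nat -> R) d lst mu :
  In mu lst -> g mu <= fold_right (fun mu acc => Rmax (g mu) acc) d lst.
Proof.
  induction lst; simpl; [tauto|]. intros [->|H].
  - apply Rmax_l.
  - eapply Rle_trans; [apply IHlst; auto|apply Rmax_r].
Qed.

Lemma fold_max_le (g : nat -> R) d lst B :
  (forall mu, In mu lst -> g mu <= B) -> d <= B ->
  fold_right (fun mu acc => Rmax (g mu) acc) d lst <= B.
Proof.
  induction lst; simpl; intros; auto. apply Rmax_lub; auto.
Qed.

Lemma fold_min_le (g : nat -> R) d lst mu :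
  In mu lst -> fold_right (fun mu acc => Rmin (g mu) acc) d lst <= g mu.
Proof.
  induction lst; simpl; [tauto|]. intros [->|H].
  - apply Rmin_l.
  - eapply Rle_trans; [apply Rmin_r|apply IHlst; auto].
Qed.

Lemma ms_ge m s mu : (mu < m)%nat -> Pt s mu <= ms m s.
Proof. intros. unfold ms. apply (fold_max_ge (Pt s)). apply in_seq. lia. Qed.

Lemma mt_le m s mu : (mu < m)%nat -> mt m s <= Pt s mu.
Proof. intros. unfold mt. apply (fold_min_le (Pt s)). apply in_seq. lia. Qed.

Lemma ms_mono m a b : (0 < m)%nat -> (forall mu, (mu < m)%nat -> Pt a mu <= Pt b mu) ->
  ms m a <= ms m b.
Proof.
  intros hm H. unfold ms at 1. apply fold_max_le.
  - intros mu Hin. apply in_seq in Hin. eapply Rle_trans; [apply H; lia|apply ms_ge; lia].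
  - eapply Rle_trans; [apply H; lia|apply ms_ge; lia].
Qed.

Definition tl (s : State) x : R := match fst s x with Some (_, t) => t | None => 0 end.

Lemma min_feasible n m L C s a mu t (Hw : WF n m L C s) : feasible L C s a mu t ->
  exists t0, feasible L C s a mu t0 /\ forall t', feasible L C s a mu t' -> t0 <= t'.
Proof.
  destruct Hw as [R0 _].
  set (cands := Pt s mu :: map (fun b => tl s b + L b) (seq 0 n)).
  assert (H : forall t', feasible L C s a mu t' -> exists c, In c cands /\ feasible L C s a mu c /\ c <= t').
  { intros t' [HP Hf].
    destruct (list_min (fun c => - c) (fun c => c <= t') cands) as [c [Hc [Hct Hmax]]].
    { exists (Pt s mu). split; [left; reflexivity|exact HP]. }
    exists c. split; [exact Hc|]. split; [|exact Hct]. split.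
    - assert (- c <= - Pt s mu) by (apply Hmax; [left; reflexivity|exact HP]). lra.
    - intros b mb tb Hb HC. destruct (Hf b mb tb Hb HC) as [h|h].
      + left. lra.
      + right. assert (- c <= - (tb + L b)); [|lra].
        apply Hmax; [|exact h]. right. apply in_map_iff. exists b.
        unfold tl; rewrite Hb. split; [reflexivity|]. apply in_seq.
        destruct (R0 _ _ _ Hb). lia. }
  intros Ht. destruct (H t Ht) as [c1 [Hc1 [Hf1 _]]].
  destruct (list_min (fun c => c) (fun c => feasible L C s a mu c) cands) as [c0 [Hc0 [Hf0 Hmin]]].
  { eauto. }
  exists c0. split; [exact Hf0|]. intros t' Ht'.
  destruct (H t' Ht') as [c [Hc [Hfc Hle]]]. specialize (Hmin c Hc Hfc). lra.
Qed.

Definition q (l s : State) (x : nat) : bool :=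
  match fst l x, fst s x with Some _, None => true | _, _ => false end.

Lemma filter_le (p p' : nat -> bool) lst : (forall x, p' x = true -> p x = true) ->
  (length (filter p' lst) <= length (filter p lst))%nat.
Proof.
  intros H; induction lst; simpl; auto.
  destruct (p' a) eqn:E1; [rewrite (H _ E1); simpl; lia|].
  destruct (p a); simpl; lia.
Qed.

Lemma filter_lt (p p' : nat -> bool) lst : (forall x, p' x = true -> p x = true) ->
  (exists x, In x lst /\ p x = true /\ p' x = false) ->
  (length (filter p' lst) < length (filter p lst))%nat.
Proof.
  intros H; induction lst; simpl; intros [x [Hx [h1 h2]]]; [tauto|].
  destruct Hx as [->|Hx].
  - rewrite h1, h2. simpl. pose proof (filter_le p p' lst H). lia.
  - assert (IH' := IHlst (ex_intro _ x (conj Hx (conj h1 h2)))).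
    destruct (p' a) eqn:E1; [rewrite (H _ E1); simpl; lia|].
    destruct (p a); simpl; lia.
Qed.

Lemma build n m L C (hL : forall a, (a<n)%nat -> 0 < L a)
  (hCsym : forall a b, C a b = C b a) (l : State) (Hl : WF n m L C l) :
  forall N s, WF n m L C s ->
  (forall b, fst s b <> None -> fst l b <> None) ->
  (forall x mu t, fst l x = Some (mu,t) -> fst s x = None -> Pt s mu <= t) ->
  (forall x mu t y my ty, fst l x = Some (mu,t) -> fst s x = None ->
      fst s y = Some (my,ty) -> C x y = true -> ty + L y <= t) ->
  (forall mu, (mu < m)%nat -> Pt s mu <= Pt l mu) ->
  (length (filter (q l s) (seq 0 n)) <= N)%nat ->
  exists D k, run n m L C s D k /\ (forall b, fst k b <> None <-> fst l b <> None) /\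
     (forall mu, (mu < m)%nat -> Pt k mu <= Pt l mu).
Proof.
  destruct Hl as [L0 [L1 L2]].
  induction N as [|N IH]; intros s Hws Ha Hb Hc He Hlen;
  (destruct (classic (exists x, In x (seq 0 n) /\ q l s x = true)) as [Hex|Hno];
   [|exists [], s; split; [constructor|]; split; [|exact He];
     intros b; split; [apply Ha|]; intros Hlb;
     destruct (fst l b) as [[mb tb]|] eqn:Elb; [|congruence];
     intros Hsb; apply Hno; exists b; split;
     [apply in_seq; destruct (L0 _ _ _ Elb); lia|unfold q; rewrite Elb, Hsb; reflexivity]]).
  - exfalso. destruct Hex as [x [Hx Hq]].
    assert (In x (filter (q l s) (seq 0 n))) by (apply filter_In; auto).
    destruct (filter (q l s) (seq 0 n)); simpl in *; [tauto|lia].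
  - destruct (list_min (tl l) (fun x => q l s x = true) (seq 0 n) Hex) as [x [Hx [Hq Hmin]]].
    unfold q in Hq. destruct (fst l x) as [[mu t]|] eqn:Elx; [|discriminate].
    destruct (fst s x) eqn:Esx; [discriminate|].
    destruct (L0 _ _ _ Elx) as [xn mum].
    assert (Hfeas : feasible L C s x mu t).
    { split; [exact (Hb _ _ _ Elx Esx)|]. intros b0 mb tb Hb0 HC. right.
      exact (Hc _ _ _ _ _ _ Elx Esx Hb0 HC). }
    destruct (min_feasible _ _ _ _ _ _ _ _ Hws Hfeas) as [t' [Hf' Hmin']].
    pose proof (Hmin' t Hfeas) as Htt.
    pose proof (hL x xn) as Lx.
    set (s' := (fun b => if Nat.eqb b x then Some (mu, t') else fst s b,
                fun nu => if Nat.eqb nu mu then t' + L x else snd s nu) : State).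
    assert (Hstep : step n m L C s (x, mu) s').
    { unfold step. split; [exact xn|]. split; [exact mum|]. split; [exact Esx|].
      exists t'. split; [exact Hf'|]. split; [exact Hmin'|reflexivity]. }
    assert (Hmin2 : forall x2 mu2 t2, fst l x2 = Some (mu2, t2) -> fst s x2 = None -> t <= t2).
    { intros x2 mu2 t2 H1 H2.
      assert (h : tl l x <= tl l x2).
      { apply Hmin. apply in_seq. destruct (L0 _ _ _ H1); lia.
        unfold q; rewrite H1, H2; reflexivity. }
      unfold tl in h. rewrite Elx, H1 in h. exact h. }
    destruct (IH s') as [D [k [Hr [Hp Hk]]]].
    + eapply step_WF; eauto.
    + intros b0. simpl. destruct (Nat.eqb_spec b0 x) as [->|hne]; [rewrite Elx; discriminate|apply Ha].
    + intros x2 mu2 t2 Hl2 Hs2. simpl in Hs2.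
      destruct (Nat.eqb_spec x2 x) as [->|hne]; [discriminate|].
      unfold Pt; simpl. destruct (Nat.eqb_spec mu2 mu) as [->|hm].
      * pose proof (Hmin2 _ _ _ Hl2 Hs2).
        assert (x <> x2) by auto.
        pose proof (hL x2 ltac:(destruct (L0 _ _ _ Hl2); lia)).
        destruct (L2 _ _ _ _ _ _ Elx Hl2 H0 (or_introl eq_refl)); lra.
      * exact (Hb _ _ _ Hl2 Hs2).
    + intros x2 mu2 t2 y my ty Hl2 Hs2 Hy HC. simpl in Hs2, Hy.
      destruct (Nat.eqb_spec x2 x) as [->|hne]; [discriminate|].
      destruct (Nat.eqb_spec y x) as [->|hy].
      * inversion Hy; subst.
        pose proof (Hmin2 _ _ _ Hl2 Hs2).
        pose proof (hL x2 ltac:(destruct (L0 _ _ _ Hl2); lia)).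
        destruct (L2 _ _ _ _ _ _ Hl2 Elx hne (or_intror HC)); lra.
      * exact (Hc _ _ _ _ _ _ Hl2 Hs2 Hy HC).
    + intros mu0 hmu0. unfold Pt; simpl. destruct (Nat.eqb_spec mu0 mu) as [->|hm].
      * pose proof (L1 _ _ _ Elx). unfold Pt in *; simpl in *; lra.
      * exact (He _ hmu0).
    + assert (length (filter (q l s') (seq 0 n)) < length (filter (q l s) (seq 0 n)))%nat; [|lia].
      apply filter_lt.
      * intros y. unfold q. simpl. destruct (Nat.eqb_spec y x); [destruct (fst l y); discriminate|auto].
      * exists x. split; [exact Hx|]. unfold q. simpl. rewrite Elx, Esx, Nat.eqb_refl. auto.
    + exists ((x, mu) :: D), k. split; [econstructor; eauto|]. auto.
Qed.

Lemma placed_formed n m L C (S : nat -> Prop) lst s :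
  run n m L C empty_state lst s -> (forall a, In a (map fst lst) <-> S a) ->
  forall b, fst s b <> None <-> S b.
Proof.
  intros Hr HS b. rewrite (run_placed _ _ _ _ _ _ _ b Hr), <- HS. simpl. tauto.
Qed.

Theorem theorem4 (n m : nat) (L : nat -> R) (C : nat -> nat -> bool)
  (hm : (0 < m)%nat)
  (hL : forall a, (a < n)%nat -> 0 < L a)
  (hCsym : forall a b, C a b = C b a)
  (hCdiag : forall a, C a a = false)
  (S S' : nat -> Prop)
  (hSJ : forall a, S a -> (a < n)%nat)
  (hS'J : forall a, S' a -> (a < n)%nat)
  (hSS' : forall a, S a -> S' a)
  (i j : State)
  (hi : formed_by n m L C S i)
  (hj : formed_by n m L C S j)
  (hdom : ms m i <= mt m j) :
  forall l : State,
    formed_by n m L C S' l -> derived n m L C j l ->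
    exists k : State,
      formed_by n m L C S' k /\ derived n m L C i k /\ ms m k <= ms m l.
Proof.
  intros l [ll [Hrl HSl]] [lj0 [D [_ HjD]]].
  destruct hi as [li [Hri HSi]], hj as [lj [Hrj HSj]].
  pose proof (run_WF _ _ _ _ hL hCsym _ _ _ Hri (WF_empty _ _ _ _)) as Wi.
  pose proof (run_WF _ _ _ _ hL hCsym _ _ _ Hrj (WF_empty _ _ _ _)) as Wj.
  pose proof (run_WF _ _ _ _ hL hCsym _ _ _ Hrl (WF_empty _ _ _ _)) as Wl.
  pose proof (placed_formed _ _ _ _ _ _ _ Hri HSi) as Pi.
  pose proof (placed_formed _ _ _ _ _ _ _ Hrj HSj) as Pj.
  pose proof (placed_formed _ _ _ _ _ _ _ Hrl HSl) as Pl.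
  destruct Wi as [I0 [I1 I2]]. destruct Wl as [L0 [L1 L2]].
  assert (Hjx : forall x, fst i x = None -> fst j x = None).
  { intros x H. destruct (fst j x) eqn:E; [|reflexivity]. exfalso.
    assert (fst j x <> None) by congruence. apply Pj, Pi in H0. congruence. }
  destruct (build n m L C hL hCsym l (conj L0 (conj L1 L2))
              (length (filter (q l i) (seq 0 n))) i (conj I0 (conj I1 I2)))
    as [D' [k [Hrk [Hpk Hk]]]].
  - intros b H. apply Pl, hSS', Pi, H.
  - intros x mu t H1 H2. destruct (L0 _ _ _ H1).
    pose proof (run_M3 _ _ _ _ hL _ _ _ _ _ _ HjD H1 (Hjx _ H2)).
    pose proof (ms_ge m i mu H0). pose proof (mt_le m j mu H0). lra.
  - intros x mu t y my ty H1 H2 H3 HC. destruct (L0 _ _ _ H1). destruct (I0 _ _ _ H3).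
    pose proof (run_M3 _ _ _ _ hL _ _ _ _ _ _ HjD H1 (Hjx _ H2)).
    pose proof (I1 _ _ _ H3).
    pose proof (ms_ge m i my H5). pose proof (mt_le m j mu H0). lra.
  - intros mu hmu. pose proof (run_M2 _ _ _ _ hL _ _ _ mu HjD).
    pose proof (ms_ge m i mu hmu). pose proof (mt_le m j mu hmu). lra.
  - lia.
  - exists k. split; [|split].
    + exists (li ++ D'). split; [eapply run_app; eauto|].
      intros a. pose proof (run_app _ _ _ _ _ _ _ _ _ Hri Hrk) as Hr.
      rewrite <- Pl, <- Hpk, (run_placed _ _ _ _ _ _ _ a Hr). simpl. tauto.
    + exists li, D'. auto.
    + apply ms_mono; auto.
Qed.
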